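(* Let $B$ be a Borel ideal of $S=k[x_1,\dots,x_n]$, let $m\in\mathrm{Bgens}(B)$ with $x_p$ dividing $m$, let $d$ be the maximal index such that $x_p$ is in the $d$-th position of $m$, and set $\mu=\frac{\operatorname{trunc}_d(m)}{x_p}$. Then $\frac{m}{x_p}$ is a $p$-socle for $B$ if and only if $\mu$ is a $p$-socle for $\operatorname{trunc}_d(B)$.
   Context: Monomials are written in factored form $x_{i_1}\cdots x_{i_r}$ with $i_1\le\dots\le i_r$; $x_{i_j}$ is in the $j$-th position. $\operatorname{trunc}_d(m)=x_{i_1}\cdots x_{i_d}$ if $d\le r$, and $=m$ otherwise; $\operatorname{trunc}_d(I)$ is the ideal generated by the $d$-truncations of all monomials of $I$. A Borel ideal is a monomial ideal closed under Borel moves $m\mapsto m\frac{x_{i_1}}{x_{j_1}}\cdots\frac{x_{i_s}}{x_{j_s}}$ ($i_t<j_t$, all $x_{j_t}\mid m$); $\mathrm{Bgens}(B)$ is the unique minimal set $T$ of monomials such that $B$ is the smallest Borel ideal containing $T$. A monomial $\nu$ is a $p$-socle for a monomial ideal $I$ if $(I:\nu)=(x_1,\dots,x_p)$. *)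

(* Defs.v *)
(* Monomials of S = k[x_1,...,x_n] are exponent vectors
   {ffun 'I_n -> nat}; variable x_{i+1} corresponds to i : 'I_n (0-based).
   A monomial ideal is represented by its set of monomials (a predicate),
   which is upward closed under divisibility. *)
From mathcomp Require Import all_boot.
Set Implicit Arguments. Unset Strict Implicit. Unset Printing Implicit Defensive.

Definition mon (n : nat) := {ffun 'I_n -> nat}.

Section Mon.
Variable n : nat.

Definition mmul (a b : mon n) : mon n := [ffun i => a i + b i].
Definition mdvd (a b : mon n) : bool := [forall i, a i <= b i].
(* m / x_i (used only when x_i divides m) *)
Definition mdiv (m : mon n) (i : 'I_n) : mon n := [ffun j => m j - (j == i)].

(* factored form x_{i_1} ... x_{i_r}, i_1 <= ... <= i_r, as a sorted seq *)
Definition fact_seq (m : mon n) : seq 'I_n :=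
  flatten [seq nseq (m i) i | i <- enum 'I_n].
Definition mon_of_seq (s : seq 'I_n) : mon n := [ffun i => count_mem i s].

(* x_p is in the j-th position (1-based) of m *)
Definition in_pos (m : mon n) (p : 'I_n) (j : nat) : Prop :=
  0 < j <= size (fact_seq m) /\ nth p (fact_seq m) j.-1 = p.

Definition trunc (d : nat) (m : mon n) : mon n :=
  if d <= size (fact_seq m) then mon_of_seq (take d (fact_seq m)) else m.

Definition mideal (I : mon n -> Prop) : Prop :=
  forall a b, I a -> mdvd a b -> I b.

Definition trunc_ideal (d : nat) (I : mon n -> Prop) : mon n -> Prop :=
  fun u => exists t, (exists m, I m /\ t = trunc d m) /\ mdvd t u.

(* Borel move m * x_{i_1}/x_{j_1} ... x_{i_s}/x_{j_s}, list s of pairs (i_t,j_t),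
   with i_t < j_t, x_{j_t} | m, and the result a monomial. *)
Definition borel_move_ok (m : mon n) (s : seq ('I_n * 'I_n)) : Prop :=
  (forall t, t \in s -> (t.1 < t.2) && (0 < m t.2)) /\
  (forall k, count (fun t => t.2 == k) s <= m k + count (fun t => t.1 == k) s).
Definition borel_move (m : mon n) (s : seq ('I_n * 'I_n)) : mon n :=
  [ffun k => m k + count (fun t => t.1 == k) s - count (fun t => t.2 == k) s].

Definition borel (I : mon n -> Prop) : Prop :=
  mideal I /\ forall m s, I m -> borel_move_ok m s -> I (borel_move m s).

Definition borel_closure (T : mon n -> Prop) : mon n -> Prop :=
  fun u => forall J, borel J -> (forall t, T t -> J t) -> J u.

Definition bgenerates (B T : mon n -> Prop) : Prop :=
  forall u, borel_closure T u <-> B u.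

Definition minimal_bgen (B T : mon n -> Prop) : Prop :=
  bgenerates B T /\
  forall T', (forall x, T' x -> T x) -> bgenerates B T' -> forall x, T x -> T' x.

Definition in_Bgens (B : mon n -> Prop) (m : mon n) : Prop :=
  exists T, minimal_bgen B T /\
    (forall T', minimal_bgen B T' -> forall x, T' x <-> T x) /\ T m.

(* nu is a p-socle for I: (I : nu) = (x_1, ..., x_p)  (p 0-based here) *)
Definition psocle (I : mon n -> Prop) (p : 'I_n) (nu : mon n) : Prop :=
  forall u, I (mmul u nu) <-> exists i : 'I_n, (i <= p) && (0 < u i).

End Mon.

(* Main.v *)
Require Import Defs.
From mathcomp Require Import all_boot.
From Stdlib Require Import Lia.

Set Implicit Arguments. Unset Strict Implicit. Unset Printing Implicit Defensive.

Section Aux.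
Variable n : nat.
Definition leo := fun a b : 'I_n => (a <= b)%N.

Lemma sum_ind (P : pred 'I_n) (k : 'I_n) :
  \sum_(j | P j) ((k == j) : nat) = P k.
Proof.
rewrite big_mkcond (bigD1 k) //= eqxx big1 ?addn0; first by case: (P k).
by move=> j /negbTE; rewrite eq_sym => ->; case: (P j).
Qed.

Lemma count_sum (a : pred 'I_n) (x : seq 'I_n) : count a x = \sum_(j | a j) count_mem j x.
Proof.
elim: x => [|y x IH] /=; first by rewrite big1.
by rewrite IH big_split /= sum_ind.
Qed.

Lemma count_fs (a : pred 'I_n) (w : mon n) : count a (fact_seq w) = \sum_(j | a j) w j.
Proof.
rewrite /fact_seq count_flatten sumnE !big_map [RHS]big_mkcond /=.
apply: eq_bigr => j _; rewrite count_nseq; by case: (a j); rewrite ?mul1n ?mul0n.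
Qed.

Lemma mosE (w : mon n) j : count_mem j (fact_seq w) = w j.
Proof. by rewrite count_fs big_pred1_eq. Qed.

Lemma pw_nseq k (y : 'I_n) : pairwise leo (nseq k y).
Proof. elim: k => //= k ->; by rewrite andbT all_nseq /leo leqnn orbT. Qed.

Lemma pw_flat (f : 'I_n -> nat) r : pairwise leo r -> pairwise leo (flatten [seq nseq (f i) i | i <- r]).
Proof.
elim: r => //= y r IH /andP[hy hr].
rewrite pairwise_cat pw_nseq (IH hr) andbT; rewrite andbT.
apply/allrelP => a b /nseqP[-> _] /flatten_mapP[z zr /nseqP[-> _]].
exact: (allP hy).
Qed.

Lemma pw_enum : pairwise leo (enum 'I_n).
Proof.
rewrite -sorted_pairwise; last by move=> a b c; apply: leq_trans.
have := iota_sorted 0 n; rewrite -val_enum_ord sorted_map; exact.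
Qed.

Lemma take_drop_le (w : mon n) d x y : x \in take d (fact_seq w) -> y \in drop d (fact_seq w) -> x <= y.
Proof.
move=> hx hy; have := pw_flat w pw_enum; rewrite -/(fact_seq w).
rewrite -(cat_take_drop d (fact_seq w)) pairwise_cat => /and3P[h _ _].
exact: (allrelP h).
Qed.

Lemma truncE d (w : mon n) j : d <= size (fact_seq w) -> trunc d w j = count_mem j (take d (fact_seq w)).
Proof. by move=> h; rewrite /trunc h /mon_of_seq ffunE. Qed.

Lemma trunc_le d (w : mon n) j : trunc d w j <= w j.
Proof.
case: (leqP d (size (fact_seq w))) => h; last by rewrite /trunc ifN // -ltnNge.
by rewrite truncE // -(mosE w j) -{2}(cat_take_drop d (fact_seq w)) count_cat leq_addr.
Qed.

Lemma trunc_low d (w : mon n) (p : 'I_n) :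
  count (fun j : 'I_n => j <= p) (fact_seq w) = d ->
  forall j, trunc d w j = if j <= p then w j else 0.
Proof.
set s := fact_seq w; set lo := (fun j : 'I_n => j <= p) => h.
have hsz : d <= size s by rewrite -h count_size.
have hc : count lo (take d s) + count lo (drop d s) = d by rewrite -count_cat cat_take_drop.
have hst : size (take d s) = d by rewrite size_takel.
have ht : forall x, x \in take d s -> x <= p.
  move=> x xt; apply/negP => /negP; rewrite -ltnNge => hx.
  have h0 : count lo (drop d s) = 0.
    apply/eqP; rewrite -leqn0 leqNgt -has_count; apply/hasP => -[y yd].
    rewrite /lo => hy; have := take_drop_le xt yd.
    by move=> hxy; move: (leq_ltn_trans hy hx); rewrite ltnNge hxy.
  move: hc; rewrite h0 addn0 -{2}hst => /eqP; rewrite -all_count => /allP /(_ _ xt).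
  by rewrite /lo leqNgt hx.
have hdr : forall x, x \in drop d s -> p < x.
  move=> y yd; rewrite ltnNge; apply/negP=> hy.
  have hct : count lo (take d s) = d by rewrite -{2}hst; apply/eqP; rewrite -all_count; apply/allP.
  have : count lo (drop d s) = 0 by apply/eqP; rewrite -(eqn_add2l d) addn0 -{1}hct hc.
  move/eqP; rewrite -leqn0 leqNgt -has_count => /negP; apply; apply/hasP; by exists y.
move=> j; rewrite truncE // -(mosE w j) -/s -{2}(cat_take_drop d s) count_cat.
case: ifP => hj.
  have -> : count_mem j (drop d s) = 0.
    by apply/count_memPn; apply/negP => /hdr; rewrite ltnNge hj.
  by rewrite addn0.
apply/count_memPn; apply/negP => /ht; by rewrite hj.
Qed.
Lemma arith (a u : nat) (bi bp : bool) : (bp -> 0 < a) -> (bi -> 0 < u) -> a + bi - bp <= u + (a - bp).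
Proof.
case: bi; case: bp => /= ha hu.
- rewrite addnK; case: a ha => [/(_ isT)//|a _]; rewrite subn1 /= -add1n leq_add2r; exact: hu isT.
- rewrite !subn0 addnC leq_add2r; exact: hu isT.
- rewrite addn0; exact: leq_addl.
- rewrite addn0 subn0; exact: leq_addl.
Qed.
End Aux.

Theorem lemma3p14 (n : nat) (B : mon n -> Prop) (m : mon n) (p : 'I_n) (d : nat) :
  borel B -> in_Bgens B m -> 0 < m p ->
  in_pos m p d -> (forall j, in_pos m p j -> j <= d) ->
  (psocle B p (mdiv m p) <-> psocle (trunc_ideal d B) p (mdiv (trunc d m) p)).
Proof.
move=> [hid hbm] hgen hmp [/andP[hd0 hds] hnth] hmax.
have Bm : B m.
  case: hgen => T [[hgT _] [_ Tm]]; apply: (proj1 (hgT m)) => J _ hJ; exact: hJ.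
set s := fact_seq m.
have hdm1 : d.-1 < size s by rewrite prednK.
have hpd : p \in drop d.-1 s by rewrite (drop_nth p hdm1) hnth mem_head.
have htake : take d s = rcons (take d.-1 s) p by rewrite -{1}(prednK hd0) (take_nth p hdm1) hnth.
have ht : forall x, x \in take d s -> x <= p.
  move=> x; rewrite htake mem_rcons inE => /orP[/eqP -> // | xt].
  exact: take_drop_le xt hpd.
have hpt : p \in take d s by rewrite htake mem_rcons mem_head.
have hdr : forall x, x \in drop d s -> p < x.
  move=> x xd; rewrite ltn_neqAle (take_drop_le hpt xd) andbT.
  apply/negP => /eqP epx.
  have hk : index x (drop d s) < size (drop d s) by rewrite index_mem.
  have hip : in_pos m p (d + index x (drop d s)).+1.
    split; first by rewrite /= -/s; move: hk; rewrite size_drop ltn_subRL.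
    rewrite /= -/s -nth_drop nth_index //; apply: val_inj; exact: esym epx.
  by move: (hmax _ hip); rewrite ltnNge leq_addr.
have hcs : count (fun j : 'I_n => j <= p) s = d.
  rewrite -(cat_take_drop d s) count_cat.
  have -> : count (fun j : 'I_n => j <= p) (drop d s) = 0.
    apply/eqP; rewrite -leqn0 leqNgt -has_count; apply/hasPn => x /hdr.
    by rewrite /= ltnNge.
  rewrite addn0; have /allP/(_ _) : all (fun j : 'I_n => j <= p) (take d s).
    by apply/allP.
  move=> _; have : all (fun j : 'I_n => j <= p) (take d s) by apply/allP.
  by rewrite all_count => /eqP ->; rewrite size_takel.
have htm := trunc_low hcs.
have hsum : \sum_(j : 'I_n | j <= p) m j = d by rewrite -count_fs.
have hmu : forall j, mdiv (trunc d m) p j = if j <= p then m j - (j == p) else 0.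
  move=> j; rewrite /mdiv ffunE htm; case: ifP => // hj.
have h1 : forall i : 'I_n, i <= p -> \sum_(j : 'I_n | j <= p) ((i == j) : nat) = 1.
  by move=> i hi; rewrite sum_ind hi.
have hsmu : (\sum_(j : 'I_n | j <= p) mdiv (trunc d m) p j).+1 = d.
  rewrite -[RHS]hsum -addn1 -(h1 p (leqnn _)) -big_split; apply: eq_bigr => j hj.
  rewrite hmu hj /= [p == j]eq_sym subnK //; case: (eqVneq j p) => [->|] //.
have hBm' : forall i : 'I_n, i <= p -> exists m', B m' /\ forall j, m' j = m j + (i == j) - (p == j).
  move=> i hip; case: (eqVneq i p) => [->|hne].
    by exists m; split => // j; rewrite addnK.
  exists (borel_move m [:: (i, p)]); split.
    apply: hbm Bm _; split.
      move=> t; rewrite inE => /eqP -> /=; rewrite hmp andbT ltn_neqAle hip andbT.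
      exact: hne.
    move=> k /=; rewrite !addn0; case: (eqVneq p k) => [<-|] //=.
    exact: ltn_addr hmp.
  by move=> j; rewrite /borel_move ffunE /= !addn0.
have hc' : forall i : 'I_n, i <= p -> forall m' : mon n, (forall j, m' j = m j + (i == j) - (p == j)) ->
    count (fun j : 'I_n => j <= p) (fact_seq m') = d.
  move=> i hi m' hm'; rewrite count_fs.
  apply: (@addIn 1); rewrite -{1}(h1 p (leqnn _)) -big_split /= -hsum -(h1 i hi) -big_split.
  apply: eq_bigr => j _; rewrite hm' subnK //; case: (eqVneq p j) => [<-|] //; exact: ltn_addr hmp.
split => H u; split.
- move=> [t [[b [Bb ->]] hdv]].
  case: (pickP (fun i : 'I_n => (i <= p) && (0 < u i))) => [i hi|hno]; first by exists i.
  have hu0 : forall j : 'I_n, j <= p -> u j = 0.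
    by move=> j hj; move: (hno j); rewrite hj /= lt0n => /negbFE/eqP.
  have hdvj : forall k, trunc d b k <= u k + mdiv (trunc d m) p k.
    by move=> k; move/forallP: hdv => /(_ k); rewrite /mmul ffunE.
  have key : forall j : 'I_n, j <= p -> b j <= m j - (j == p).
    move=> j hj.
    case: (leqP d (size (fact_seq b))) => hsb; last first.
      by move: (hdvj j); rewrite hmu hj hu0 // add0n /trunc ifN // -ltnNge.
    have hdr' : forall y, y \in drop d (fact_seq b) -> p < y.
      move=> y yd; rewrite ltnNge; apply/negP => hy.
      have hall : count (fun j : 'I_n => j <= p) (take d (fact_seq b)) = d.
        rewrite -{2}(size_takel hsb); apply/eqP; rewrite -all_count; apply/allP => x xt.
        exact: leq_trans (take_drop_le xt yd) hy.
      have : count (fun j : 'I_n => j <= p) (take d (fact_seq b)) <= \sum_(k : 'I_n | k <= p) mdiv (trunc d m) p k.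
        rewrite count_sum; apply: leq_sum => k hk; rewrite -truncE //; move: (hdvj k).
        by rewrite hu0.
      by rewrite hall -{1}hsmu ltnn.
    have hbj : b j = count_mem j (take d (fact_seq b)) + count_mem j (drop d (fact_seq b)).
      by rewrite -count_cat cat_take_drop mosE.
    have h0 : count_mem j (drop d (fact_seq b)) = 0.
      by apply/count_memPn; apply/negP => /hdr'; rewrite ltnNge hj.
    rewrite h0 addn0 in hbj.
    by move: (hdvj j); rewrite hu0 // add0n hmu hj truncE // hbj.
  pose u' := [ffun j : 'I_n => if j <= p then 0 else b j].
  have : B (mmul u' (mdiv m p)).
    apply: hid Bb _; apply/forallP => j; rewrite /mmul /mdiv !ffunE.
    case: ifP => hj; [by rewrite add0n key | exact: leq_addr].
  move/(proj1 (H u')) => [i /andP[hi]]; by rewrite /u' ffunE hi.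
- move=> [i /andP[hi hui]]; have [m' [Bm' hm']] := hBm' i hi.
  exists (trunc d m'); split; first by exists m'.
  apply/forallP => j; rewrite /mmul ffunE (trunc_low (hc' i hi m' hm')) hmu; case: ifP => hj //.
  rewrite hm' [p == j]eq_sym; apply: arith => [/eqP->|/eqP<-] //.
- move=> Bb.
  case: (pickP (fun i : 'I_n => (i <= p) && (0 < u i))) => [i hi|hno]; first by exists i.
  have hu0 : forall j : 'I_n, j <= p -> u j = 0.
    by move=> j hj; move: (hno j); rewrite hj /= lt0n => /negbFE/eqP.
  pose b := mmul u (mdiv m p).
  pose u'' := [ffun j : 'I_n => if j <= p then 0 else trunc d b j].
  have : trunc_ideal d B (mmul u'' (mdiv (trunc d m) p)).
    exists (trunc d b); split; first by exists b.
    apply/forallP => j; rewrite /mmul ffunE hmu /u'' ffunE; case: ifP => hj; last exact: leq_addr.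
    rewrite add0n; apply: leq_trans (trunc_le d b j) _.
    by rewrite /b /mmul /mdiv !ffunE hu0.
  move/(proj1 (H u'')) => [i /andP[hi]]; by rewrite /u'' ffunE hi.
- move=> [i /andP[hi hui]]; have [m' [Bm' hm']] := hBm' i hi.
  apply: hid Bm' _; apply/forallP => j; rewrite /mmul /mdiv !ffunE hm' [p == j]eq_sym.
  apply: arith => [/eqP->|/eqP<-] //.
Qed.
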